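(* Let $N=(P_N,T_N,F_N,I_N,O_N)$ and $M=(P_M,T_M,F_M,I_M,O_M)$ be pWF nets with disjoint node sets, both sub-sound. Then for every place $p\in P_N$, the net $N\otimes_p M$ is sub-sound.
   Context: Petri nets and markings. A Petri net is a triple $(P,T,F)$ with $P$ a finite set of places, $T$ a finite set of transitions, $P\cap T=\emptyset$, and $F\subseteq (P\times T)\cup(T\times P)$. For a node $x$, $\bullet x=\{y\mid (y,x)\in F\}$, $x\bullet=\{y\mid (x,y)\in F\}$. A marking is a multiset over $P$ (a function $P\to\mathbb N$); sets of places are identified with bags of multiplicity one, $+,-,\le$ are pointwise, and $k.m$ is the sum of $k$ copies of $m$. Transition $t$ is enabled at $m$ iff $\bullet t\le m$, firing gives $m-\bullet t+t\bullet$, and $m\xrightarrow{*}m'$ denotes reachability by a finite (possibly empty) firing sequence. A pWF net is $(P,T,F,I,O)$ with $(P,T,F)$ a Petri net, $I,O\subseteq P$ non-empty (input/output places), every node reachable by a directed path from some node of $I$, and some node of $O$ reachable from every node; input places may have incoming edges and output places outgoing edges. Sub-soundness. A pWF net is sub-sound if for all integers $k\ge k'\ge 0$ and every marking $m'$: if $k.I\xrightarrow{*}m'+k'.O$ then $m'\xrightarrow{*}(k-k').O$. Place substitution. For WF nets $N=(P,T,F,I,O)$ and a pWF net $M=(P',T',F',I',O')$ with disjoint node sets and $p\in P$, $N\otimes_p M$ is obtained from $N$ by deleting $p$ and all edges incident to $p$, adding all nodes and edges of $M$, adding an edge $(t,p')$ for each $t\in\bullet_N p$ and $p'\in I'$,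 and an edge $(p',t)$ for each $p'\in O'$ and $t\in p\bullet_N$; its input set is $(I\setminus\{p\})\cup I'$ if $p\in I$ and $I$ otherwise, and its output set is $(O\setminus\{p\})\cup O'$ if $p\in O$ and $O$ otherwise. *)

(* Defs.v *)
From HB Require Import structures.
From mathcomp Require Import all_boot.
Set Implicit Arguments. Unset Strict Implicit. Unset Printing Implicit Defensive.

(* Places and transitions are the elements of two finite types P and T, so
   P ∩ T = ∅ holds by construction.  The flow relation F is given by
   pre t q  <-> (q,t) ∈ F   and   post t q <-> (t,q) ∈ F. *)
Record net (P T : finType) := Net {
  pre  : T -> P -> bool;
  post : T -> P -> bool;
  inp  : {set P};
  outp : {set P}
}.

Section Nets.
Variables (P T : finType) (N : net P T).

Definition flow : rel (P + T) := fun x y =>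
  match x, y with
  | inl q, inr t => pre N t q
  | inr t, inl q => post N t q
  | _, _ => false
  end.

Definition pWF : Prop :=
  [/\ inp N != set0, outp N != set0,
      (forall x : P + T, exists2 i, i \in inp N & connect flow (inl i) x) &
      (forall x : P + T, exists2 o, o \in outp N & connect flow x (inl o))].

Definition marking := {ffun P -> nat}.

Definition setm (k : nat) (A : {set P}) : marking := [ffun q => k * (q \in A)].
Definition addm (m1 m2 : marking) : marking := [ffun q => m1 q + m2 q].

Definition enabled (t : T) (m : marking) : bool :=
  [forall q, (pre N t q : nat) <= m q].
Definition fire (t : T) (m : marking) : marking :=
  [ffun q => m q - pre N t q + post N t q].

Inductive reach : marking -> marking -> Prop :=
  | reach_refl m : reach m m
  | reach_step m t m' : enabled t m -> reach (fire t m) m' -> reach m m'.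

Definition subsound : Prop :=
  forall (k k' : nat) (m' : marking), k' <= k ->
    reach (setm k (inp N)) (addm m' (setm k' (outp N))) ->
    reach m' (setm (k - k') (outp N)).

End Nets.

(* Place substitution N ⊗_p M.  Node sets are made disjoint by taking sums:
   places ({x : PN | x != p} + PM), transitions (TN + TM). *)
Section Subst.
Variables (PN TN PM TM : finType) (N : net PN TN) (p : PN) (M : net PM TM).

Definition splace := ({x : PN | x != p} + PM)%type.
Definition strans := (TN + TM)%type.

Definition spre (t : strans) (q : splace) : bool :=
  match t, q with
  | inl tn, inl qn => pre N tn (val qn)
  | inr tm, inr qm => pre M tm qm
  | inl tn, inr qm => pre N tn p && (qm \in outp M)
  | inr _, inl _ => false
  end.

Definition spost (t : strans) (q : splace) : bool :=
  match t, q with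
  | inl tn, inl qn => post N tn (val qn)
  | inr tm, inr qm => post M tm qm
  | inl tn, inr qm => post N tn p && (qm \in inp M)
  | inr _, inl _ => false
  end.

Definition sinp : {set splace} :=
  [set q : splace | match q with
                    | inl qn => val qn \in inp N
                    | inr qm => (p \in inp N) && (qm \in inp M)
                    end].

Definition soutp : {set splace} :=
  [set q : splace | match q with
                    | inl qn => val qn \in outp N
                    | inr qm => (p \in outp N) && (qm \in outp M)
                    end].

Definition subst_net : net splace strans := Net spre spost sinp soutp.

End Subst.

(* Main.v *)
Require Import Defs.
From HB Require Import structures.
From mathcomp Require Import all_boot zify.
Set Implicit Arguments. Unset Strict Implicit. Unset Printing Implicit Defensive.

Section Gen.
Variables (P T : finType) (N : net P T).

Lemma reach_trans (m1 m2 m3 : marking P) :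
  reach N m1 m2 -> reach N m2 m3 -> reach N m1 m3.
Proof.
elim=> [//|m t m' en _ IH] H; apply: reach_step en _; exact: IH.
Qed.

Lemma enabled_add t (m x : marking P) : enabled N t m -> enabled N t (addm m x).
Proof.
move/forallP=> H; apply/forallP=> q; rewrite ffunE; have := H q; lia.
Qed.

Lemma fire_add t (m x : marking P) : enabled N t m ->
  fire N t (addm m x) = addm (fire N t m) x.
Proof.
move/forallP=> H; apply/ffunP=> q; rewrite !ffunE; have := H q; lia.
Qed.

Lemma reach_add (m m' x : marking P) : reach N m m' -> reach N (addm m x) (addm m' x).
Proof.
elim=> [m0|m0 t m1 en _ IH]; first exact: reach_refl.
apply: reach_step (enabled_add x en) _; by rewrite fire_add.
Qed.

Lemma reach_zero (m m' : marking P) :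
  (forall t, exists q, post N t q) -> reach N m m' ->
  (forall q, m' q = 0) -> forall q, m q = 0.
Proof.
move=> Hp; elim=> [//|m0 t m1 en _ IH] H0.
have := IH H0; case: (Hp t) => q Hq /(_ q); rewrite ffunE Hq; lia.
Qed.

Lemma pWF_post : pWF N -> forall t, exists q, post N t q.
Proof.
case=> _ _ _ H t; case: (H (inr t)) => o _ /connectP [[|y s]] /=.
  by by [].
case/andP; case: y => [q|t'] //= Hq _ _; by exists q.
Qed.

Lemma noinc a c (m : marking P) : pWF N -> subsound N ->
  reach N (setm a (inp N)) (addm m (setm c (outp N))) -> c <= a.
Proof.
move=> Hw Hs Hr; rewrite leqNgt; apply/negP=> Hlt.
have Ho : outp N != set0 by case: Hw.
case/set0Pn: Ho => o Ho.
set m'' := addm m (setm (c - a) (outp N)).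
have E : addm m (setm c (outp N)) = addm m'' (setm a (outp N)).
  apply/ffunP=> q; rewrite !ffunE; lia.
rewrite E in Hr; have := Hs a a m'' (leqnn a) Hr.
move/(reach_zero (pWF_post Hw))=> H.
have H' : forall q, m'' q = 0 by apply: H => q; rewrite ffunE subnn.
have := H' o; rewrite /m'' !ffunE Ho; lia.
Qed.

Lemma IO1 : subsound N -> reach N (setm 1 (inp N)) (setm 1 (outp N)).
Proof.
move=> Hs; have := Hs 1 0 (setm 1 (inp N)) isT.
have -> : addm (setm 1 (inp N)) (setm 0 (outp N)) = setm 1 (inp N).
  by apply/ffunP=> q; rewrite !ffunE; lia.
by move=> /(_ (reach_refl _ _)).
Qed.

End Gen.

Section Sub.
Variables (PN TN PM TM : finType) (N : net PN TN) (M : net PM TM) (p : PN).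
Local Notation S := (subst_net N p M).
Local Notation SP := (splace PM p).

Definition mk (n : marking PN) (m : marking PM) : marking SP :=
  [ffun q => match q with inl qn => n (val qn) | inr qm => m qm end].
Definition nm (s : marking SP) (j : nat) : marking PN :=
  [ffun q => match (insub q : option {x : PN | x != p}) with
             | Some qn => s (inl qn) | None => j end].
Definition Mp (s : marking SP) : marking PM := [ffun q => s (inr q)].

Lemma nm_val s j (qn : {x : PN | x != p}) : nm s j (val qn) = s (inl qn).
Proof. by rewrite ffunE valK. Qed.
Lemma nm_p s j : nm s j p = j.
Proof. by rewrite ffunE insubF ?eqxx. Qed.

Lemma mk_nm s j : mk (nm s j) (Mp s) = s.
Proof. by apply/ffunP=> -[qn|qm]; rewrite !ffunE ?valK. Qed.

Lemma liftM n (m m' : marking PM) : reach M m m' -> reach S (mk n m) (mk n m').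
Proof.
elim=> [m0|m0 t m1 en _ IH]; first exact: reach_refl.
apply: (@reach_step _ _ S _ (inr t)).
  apply/forallP=> -[qn|qm]; rewrite ffunE //=.
  by move/forallP: en; apply.
suff -> : fire S (inr t) (mk n m0) = mk n (fire M t m0) by [].
by apply/ffunP=> -[qn|qm]; rewrite !ffunE /= ?subn0 ?addn0.
Qed.

Lemma liftN (n n' : marking PN) :
  reach M (setm 1 (inp M)) (setm 1 (outp M)) -> reach N n n' ->
  reach S (mk n (setm (n p) (outp M))) (mk n' (setm (n' p) (outp M))).
Proof.
move=> HIO; elim=> [n0|n0 t n1 en _ IH]; first exact: reach_refl.
have enp := en; move/forallP: enp => enp.
apply: (@reach_step _ _ S _ (inl t)).
  apply/forallP=> -[qn|qm]; rewrite !ffunE /=; first exact: enp.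
  have := enp p; case: (pre N t p); case: (qm \in outp M) => /=; lia.
apply: reach_trans IH.
have -> : fire S (inl t) (mk n0 (setm (n0 p) (outp M))) =
  mk (fire N t n0) (addm (setm (post N t p) (inp M))
                         (setm (n0 p - pre N t p) (outp M))).
  apply/ffunP=> -[qn|qm]; rewrite !ffunE //=.
  have := enp p; case: (pre N t p); case: (post N t p);
    case: (qm \in outp M); case: (qm \in inp M) => /=; lia.
apply: liftM.
have -> : fire N t n0 p = n0 p - pre N t p + post N t p by rewrite ffunE.
case: (post N t p).
  have -> : setm (n0 p - pre N t p + true) (outp M) =
     addm (setm 1 (outp M)) (setm (n0 p - pre N t p) (outp M)).
    by apply/ffunP=> q; rewrite !ffunE; lia.
  exact: reach_add.
have -> : addm (setm false (inp M)) (setm (n0 p - pre N t p) (outp M)) =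
    setm (n0 p - pre N t p + false) (outp M).
  by apply/ffunP=> q; rewrite !ffunE; lia.
exact: reach_refl.
Qed.


Definition Inv k (s : marking SP) a c :=
  [/\ c <= a, reach N (setm k (inp N)) (nm s (a - c)) &
      reach M (setm a (inp M)) (addm (Mp s) (setm c (outp M)))].

Lemma Inv_step k s a c t : pWF M -> subsound M ->
  enabled S t s -> Inv k s a c -> exists a' c', Inv k (fire S t s) a' c'.
Proof.
move=> HwM HsM /forallP en [Hca HN HM].
case: t en => [t|t] en; last first.
  exists a, c; split=> //.
    suff -> : nm (fire S (inr t) s) (a - c) = nm s (a - c) by [].
    apply/ffunP=> q; rewrite !ffunE; case: insubP => [qn _ _|_] //.
    by rewrite ffunE /= subn0 addn0.
  have enM : enabled M t (Mp s).
    apply/forallP=> q; rewrite ffunE; exact: (en (inr q)).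
  have -> : Mp (fire S (inr t) s) = fire M t (Mp s).
    by apply/ffunP=> q; rewrite !ffunE.
  apply: reach_trans HM _.
  apply: reach_step (enabled_add _ enM) _; rewrite fire_add //.
  exact: reach_refl.
set b := pre N t p; set d := post N t p.
have Hcb : c + b <= a.
  rewrite /b; case Hb: (pre N t p); last by rewrite addn0.
  set r : marking PM := [ffun q => Mp s q - (q \in outp M)].
  have E : addm (Mp s) (setm c (outp M)) = addm r (setm (c + 1) (outp M)).
    apply/ffunP=> q; rewrite !ffunE; have := en (inr q); rewrite /= Hb /=.
    case: (q \in outp M) => /=; lia.
  rewrite E in HM; exact: noinc HwM HsM HM.
exists (a + d), (c + b); split.
- lia.
- apply: reach_trans HN _.
  have enN : enabled N t (nm s (a - c)).
    apply/forallP=> q; rewrite ffunE; case: insubP => [qn _ <-|].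
      exact: (en (inl qn)).
    move/negPn/eqP=> ->; rewrite -/b; lia.
  apply: reach_step enN _.
  suff -> : fire N t (nm s (a - c)) = nm (fire S (inl t) s) (a + d - (c + b)).
    exact: reach_refl.
  apply/ffunP=> q; rewrite !ffunE; case: insubP => [qn _ <-|].
    by rewrite !ffunE.
  move/negPn/eqP=> ->; rewrite -/b -/d; lia.
- have := reach_add (setm d (inp M)) HM.
  suff -> : addm (addm (Mp s) (setm c (outp M))) (setm d (inp M)) =
      addm (Mp (fire S (inl t) s)) (setm (c + b) (outp M)).
    suff -> : addm (setm a (inp M)) (setm d (inp M)) = setm (a + d) (inp M) by [].
    by apply/ffunP=> q; rewrite !ffunE; lia.
  apply/ffunP=> q; rewrite !ffunE /= -/b -/d.
  have := en (inr q); rewrite /= -/b.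
  case: (q \in outp M); case: (q \in inp M); rewrite /= ?andbT ?andbF; lia.
Qed.

Lemma Inv_reach k s s' a c : pWF M -> subsound M ->
  reach S s s' -> Inv k s a c -> exists a' c', Inv k s' a' c'.
Proof.
move=> Hw Hs Hr; elim: Hr a c => [s0|s0 t s1 en _ IH] a c HI.
  by exists a, c.
have [a' [c' HI']] := Inv_step Hw Hs en HI; exact: IH HI'.
Qed.

End Sub.

Unset Implicit Arguments.

Theorem mainTheorem8 (PN TN PM TM : finType) (N : net PN TN) (M : net PM TM)
    (p : PN) :
  pWF N -> pWF M -> subsound N -> subsound M ->
  subsound (subst_net N p M).
Proof.
move=> HwN HwM HsN HsM k k' m' Hk Hr.
set pi := (p \in inp N).
have HI : Inv N M k (setm k (sinp N p M)) (k * pi) 0.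
  split=> //.
    suff -> : nm (setm k (sinp N p M)) (k * pi - 0) = setm k (inp N).
      exact: reach_refl.
    apply/ffunP=> q; rewrite !ffunE; case: insubP => [qn _ <-|].
      by rewrite ffunE inE.
    by move/negPn/eqP=> ->; rewrite subn0.
  suff -> : addm (Mp (setm k (sinp N p M))) (setm 0 (outp M)) =
            setm (k * pi) (inp M) by exact: reach_refl.
  apply/ffunP=> q; rewrite !ffunE inE -/pi; case: pi; case: (q \in inp M) => /=; lia.
have [a [c [Hca HN HM]]] := Inv_reach HwM HsM Hr HI.
set po := (p \in outp N).
set e := k' * po.
set s := addm m' (setm k' (soutp N p M)) in HN HM.
have EM : addm (Mp s) (setm c (outp M)) =
          addm (Mp m') (setm (c + e) (outp M)).
  apply/ffunP=> q; rewrite !ffunE inE /e /po.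
  case: (p \in outp N); case: (q \in outp M) => /=; lia.
rewrite EM in HM.
have Hce := noinc HwM HsM HM.
have RM := HsM _ _ _ Hce HM.
have EN : nm s (a - c) = addm (nm m' (a - c - e)) (setm k' (outp N)).
  apply/ffunP=> q; rewrite !ffunE; case: insubP => [qn _ <-|].
    by rewrite !ffunE inE.
  move/negPn/eqP=> ->; move: Hce; rewrite /e /po; lia.
rewrite EN in HN.
have RN := HsN _ _ _ Hk HN.
rewrite -(mk_nm m' (a - c - e)).
have RM' : reach M (Mp m') (setm (nm m' (a - c - e) p) (outp M)).
  by rewrite nm_p -subnDA.
apply: reach_trans (liftM N p _ RM') _.
have := liftN p (IO1 HsM) RN.
suff -> : mk p (setm (k - k') (outp N)) (setm (setm (k - k') (outp N) p) (outp M))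
  = setm (k - k') (soutp N p M) by [].
apply/ffunP=> -[qn|qm]; rewrite !ffunE inE //= /po.
by case: (p \in outp N); case: (qm \in outp M) => /=; lia.
Qed.
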